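(* (Wireless network localization.) Let $n\ge 1$, let $\phi_{k1},\dots,\phi_{kn}\in\mathbb{R}$ and $\xi_{k1},\dots,\xi_{kn}\ge 0$. For $\mathbf{x}=[x_1,\dots,x_n]^{\mathsf T}\succeq\mathbf{0}$ let $\mathbf{J}_{\mathrm e}(\mathbf{p}_k;\mathbf{x})=\sum_{j=1}^n x_j\,\xi_{kj}\,\mathbf{J}_{\mathrm r}(\phi_{kj})$ and $\mathcal{P}(\mathbf{p}_k;\mathbf{x})=\operatorname{tr}\{\mathbf{J}_{\mathrm e}^{-1}(\mathbf{p}_k;\mathbf{x})\}$. Then $\mathcal{P}(\mathbf{p}_k;\mathbf{x})$ is a convex function of $\mathbf{x}\succeq\mathbf{0}$, and whenever $\mathbf{J}_{\mathrm e}(\mathbf{p}_k;\mathbf{x})$ is invertible, $$\mathcal{P}(\mathbf{p}_k;\mathbf{x})=\frac{4\cdot\mathbf{1}^{\mathsf T}\mathbf{R}_k\mathbf{x}}{\mathbf{x}^{\mathsf T}\mathbf{R}_k^{\mathsf T}\boldsymbol{\Lambda}_k\mathbf{R}_k\mathbf{x}},$$ where $\mathbf{R}_k=\operatorname{diag}\{\xi_{k1},\dots,\xi_{kn}\}$ and $\boldsymbol{\Lambda}_k$ is the symmetric matrix of rank at most $3$ given by $$\boldsymbol{\Lambda}_k=\mathbf{1}\mathbf{1}^{\mathsf T}-\mathbf{c}(2\boldsymbol{\phi}_k)\mathbf{c}(2\boldsymbol{\phi}_k)^{\mathsf T}-\mathbf{s}(2\boldsymbol{\phi}_k)\mathbf{s}(2\boldsymbol{\phi}_k)^{\mathsf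 T},\qquad \boldsymbol{\phi}_k=[\phi_{k1},\dots,\phi_{kn}]^{\mathsf T}.$$ (Radar network localization.) Let $N_t,N_r\ge1$, let $\phi_{kj}\in\mathbb{R}$ and $\xi_{kj}\ge 0$ for $k=1,\dots,N_r$, $j=1,\dots,N_t$. For $\mathbf{x}\in\mathbb{R}^{N_t}$, $\mathbf{x}\succeq\mathbf{0}$, let $\mathbf{J}_{\mathrm e}(\mathbf{p}_0;\mathbf{x})=\sum_{j=1}^{N_t}\sum_{k=1}^{N_r}x_j\,\xi_{kj}\,\mathbf{J}_{\mathrm r}(\phi_{kj})$ and $\mathcal{P}(\mathbf{p}_0;\mathbf{x})=\operatorname{tr}\{\mathbf{J}_{\mathrm e}^{-1}(\mathbf{p}_0;\mathbf{x})\}$. Then $\mathcal{P}(\mathbf{p}_0;\mathbf{x})$ is a convex function of $\mathbf{x}\succeq\mathbf{0}$, and whenever $\mathbf{J}_{\mathrm e}(\mathbf{p}_0;\mathbf{x})$ is invertible, $$\mathcal{P}(\mathbf{p}_0;\mathbf{x})=\frac{4\cdot\mathbf{1}^{\mathsf T}\mathbf{R}\mathbf{x}}{\mathbf{x}^{\mathsf T}\mathbf{R}^{\mathsf T}\boldsymbol{\Lambda}\mathbf{R}\mathbf{x}},$$ where $\mathbf{R}=[\mathbf{R}_1^{\mathsf T}\ \mathbf{R}_2^{\mathsf T}\ \cdots\ \mathbf{R}_{N_r}^{\mathsf T}]^{\mathsf T}\in\mathbb{R}^{N_rN_t\times N_t}$ with $\mathbf{R}_k=\operatorname{diag}\{\xi_{k1},\dots,\xi_{kN_t}\}$,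 and $\boldsymbol{\Lambda}$ is the symmetric matrix of rank at most $3$ given by $\boldsymbol{\Lambda}=\mathbf{1}\mathbf{1}^{\mathsf T}-\mathbf{c}(2\boldsymbol{\phi})\mathbf{c}(2\boldsymbol{\phi})^{\mathsf T}-\mathbf{s}(2\boldsymbol{\phi})\mathbf{s}(2\boldsymbol{\phi})^{\mathsf T}$ with $\boldsymbol{\phi}=[\boldsymbol{\phi}_1^{\mathsf T}\ \cdots\ \boldsymbol{\phi}_{N_r}^{\mathsf T}]^{\mathsf T}$, $\boldsymbol{\phi}_k=[\phi_{k1},\dots,\phi_{kN_t}]^{\mathsf T}$.
   Context: Notation: $\mathbf{u}(\phi)=[\cos\phi\ \ \sin\phi]^{\mathsf T}$, $\mathbf{J}_{\mathrm r}(\phi)=\mathbf{u}(\phi)\mathbf{u}(\phi)^{\mathsf T}$; for $\boldsymbol\phi=[\phi_1,\dots,\phi_m]^{\mathsf T}$, $\mathbf{c}(\boldsymbol\phi)=[\cos\phi_1,\dots,\cos\phi_m]^{\mathsf T}$ and $\mathbf{s}(\boldsymbol\phi)=[\sin\phi_1,\dots,\sin\phi_m]^{\mathsf T}$; $\mathbf{1}$ is the all-ones vector of appropriate dimension; $\mathbf{x}\succeq\mathbf{0}$ means entrywise nonnegative. $\mathbf{x}$ is the power allocation vector, $\xi$'s are the equivalent ranging coefficients, and $\mathcal{P}$ is the squared position error bound (SPEB); the SPEB is regarded as $+\infty$ when the matrix $\mathbf{J}_{\mathrm e}$ is singular. *)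

(* Defs.v *)
From HB Require Import structures.
From mathcomp Require Import all_boot all_order all_algebra.
From mathcomp Require Import all_classical all_reals all_analysis.
Set Implicit Arguments. Unset Strict Implicit. Unset Printing Implicit Defensive.
Import Order.TTheory GRing.Theory Num.Theory.
Local Open Scope ring_scope.

Section Defs.
Variable R : realType.

Definition uvec (phi : R) : 'cV[R]_2 :=
  \col_(i < 2) (if i == 0 then cos phi else sin phi).

Definition Jr (phi : R) : 'M[R]_2 := uvec phi *m (uvec phi)^T.

Definition nonneg_vec m (x : 'cV[R]_m) : Prop := forall i, 0 <= x i 0.

Definition speb (J : 'M[R]_2) : \bar R :=
  if J \in unitmx then ((\tr (invmx J))%:E)%E else (+oo)%E.

Definition convex_on_nonneg m (f : 'cV[R]_m -> \bar R) : Prop :=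
  forall (x y : 'cV[R]_m) (t : R), nonneg_vec x -> nonneg_vec y ->
    0 <= t -> t <= 1 ->
    (f (t *: x + (1 - t) *: y)%R <= t%:E * f x + (1 - t)%:E * f y)%E.

Definition ones m : 'cV[R]_m := const_mx 1.
Definition cvec m (phi : 'cV[R]_m) : 'cV[R]_m := map_mx cos phi.
Definition svec m (phi : 'cV[R]_m) : 'cV[R]_m := map_mx sin phi.

Definition Lambda m (phi : 'cV[R]_m) : 'M[R]_m :=
  ones m *m (ones m)^T
  - cvec (2 *: phi) *m (cvec (2 *: phi))^T
  - svec (2 *: phi) *m (svec (2 *: phi))^T.

Definition Rdiag m (xi : 'cV[R]_m) : 'M[R]_m := diag_mx xi^T.

Definition Je_wireless n (phi xi x : 'cV[R]_n) : 'M[R]_2 :=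
  \sum_(j < n) (x j 0 * xi j 0) *: Jr (phi j 0).

Definition Je_radar Nr Nt (phi xi : 'I_Nr -> 'cV[R]_Nt) (x : 'cV[R]_Nt)
  : 'M[R]_2 :=
  \sum_(j < Nt) \sum_(k < Nr) (x j 0 * xi k j 0) *: Jr (phi k j 0).

Definition Rstack Nr Nt (xi : 'I_Nr -> 'cV[R]_Nt) :
  'M[R]_(\sum_(k < Nr) Nt, Nt) := \mxcol_(k < Nr) Rdiag (xi k).
Definition phistack Nr Nt (phi : 'I_Nr -> 'cV[R]_Nt) :
  'cV[R]_(\sum_(k < Nr) Nt) := \mxcol_(k < Nr) phi k.

Definition speb_formula p q (A : 'M[R]_(p, q)) (L : 'M[R]_p) (x : 'cV[R]_q) : R :=
  4 * ((ones p)^T *m A *m x) 0 0 / ((x^T *m A^T *m L *m A *m x) 0 0).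

End Defs.

(* Main.v *)
Require Import Defs.
From HB Require Import structures.
From mathcomp Require Import all_boot all_order all_algebra.
From mathcomp Require Import all_classical all_reals all_analysis.
From mathcomp Require Import ring lra.
Import Order.TTheory GRing.Theory Num.Theory.
Local Open Scope ring_scope.
Set Implicit Arguments. Unset Strict Implicit.
Section S1.
Variable R : realType.

Lemma det22 (A : 'M[R]_2) : \det A = A 0 0 * A 1 1 - A 0 1 * A 1 0.
Proof.
rewrite (expand_det_row _ 0) !big_ord_recl big_ord0 /cofactor.
rewrite !det_mx11 !mxE /=.
have L1 : lift (0:'I_2) (0:'I_1) = 1 by apply/val_inj.
have L2 : lift (1:'I_2) (0:'I_1) = 0 by apply/val_inj.
rewrite ?L1 ?L2 /bump /= ?expr0 ?expr1.
have -> : (ord0 : 'I_2) = 0 by apply/val_inj.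
ring.
Qed.

Lemma tr_inv22 (A : 'M[R]_2) : A \in unitmx ->
  \tr (invmx A) = (A 0 0 + A 1 1) / \det A.
Proof.
move=> uA; rewrite /invmx uA mxtraceZ /mxtrace !big_ord_recl big_ord0 !mxE /cofactor.
rewrite !det_mx11 !mxE /=.
have L1 : lift (0:'I_2) (0:'I_1) = 1 by apply/val_inj.
have L2 : lift (1:'I_2) (0:'I_1) = 0 by apply/val_inj.
rewrite ?L1 ?L2 /bump /= ?expr0 ?expr1.
rewrite (_ : (1 + 0 + (1 + 0))%N = 2%N) // expr2 mulN1r opprK !mul1r addr0 mulrC addrC //.
Qed.
End S1.


Section S.
Variable R : realFieldType.

Definition qf (a b c z1 z2 : R) := a * z1 ^+ 2 + 2 * b * z1 * z2 + c * z2 ^+ 2.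
Definition FF (a b c z1 z2 y1 y2 : R) :=
  2 * z1 - qf a b c z1 z2 + (2 * y2 - qf a b c y1 y2).

Lemma qf_ge0 a b c z1 z2 : 0 < a -> 0 < a * c - b ^+ 2 -> 0 <= qf a b c z1 z2.
Proof.
move=> a0 D0.
have H : a * qf a b c z1 z2 = (a * z1 + b * z2) ^+ 2 + (a * c - b ^+ 2) * z2 ^+ 2.
  rewrite /qf; ring.
have : 0 <= a * qf a b c z1 z2.
  by rewrite H addr_ge0 ?sqr_ge0 // mulr_ge0 ?sqr_ge0 // ltW.
by rewrite pmulr_rge0.
Qed.

Lemma FF_bound a b c z1 z2 y1 y2 : 0 < a -> 0 < a * c - b ^+ 2 ->
  FF a b c z1 z2 y1 y2 <= (a + c) / (a * c - b ^+ 2).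
Proof.
move=> a0 D0.
set D := a * c - b ^+ 2.
have Dn : D != 0 by rewrite gt_eqF.
have E : (a + c) / D - FF a b c z1 z2 y1 y2 =
  qf a b c (z1 - c / D) (z2 + b / D) + qf a b c (y1 + b / D) (y2 - a / D).
  rewrite /FF /qf /D; field; by rewrite -/D.
rewrite -subr_ge0 E addr_ge0 // qf_ge0 //.
Qed.

Lemma FF_opt a b c : 0 < a * c - b ^+ 2 ->
  FF a b c (c / (a * c - b ^+ 2)) (- b / (a * c - b ^+ 2))
           (- b / (a * c - b ^+ 2)) (a / (a * c - b ^+ 2))
  = (a + c) / (a * c - b ^+ 2).
Proof.
move=> D0; have Dn : a * c - b ^+ 2 != 0 by rewrite gt_eqF.
rewrite /FF /qf; field; done.
Qed.

Lemma FF_lin t a b c a' b' c' z1 z2 y1 y2 :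
  FF (t * a + (1 - t) * a') (t * b + (1 - t) * b') (t * c + (1 - t) * c') z1 z2 y1 y2
  = t * FF a b c z1 z2 y1 y2 + (1 - t) * FF a' b' c' z1 z2 y1 y2.
Proof. rewrite /FF /qf; ring. Qed.

Lemma psd_pd (a b c : R) : (forall z1 z2, 0 <= qf a b c z1 z2) -> a * c - b ^+ 2 != 0 ->
  0 < a /\ 0 < a * c - b ^+ 2.
Proof.
move=> H Dn.
have a0 : 0 <= a by have := H 1 0; rewrite /qf; lra.
case: (eqVneq a 0) => [a00|an0].
  have bn : b != 0 by move: Dn; rewrite a00 mul0r sub0r oppr_eq0 sqrf_eq0.
  have := H (- (c + 1) / (2 * b)) 1; rewrite /qf a00 mul0r add0r expr1n mulr1.
  have -> : 2 * b * (- (c + 1) / (2 * b)) = - (c + 1).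
    by field.
  lra.
have ap : 0 < a by rewrite lt_def an0.
split=> //.
have := H (- b) a; rewrite /qf.
have -> : a * (- b) ^+ 2 + 2 * b * - b * a + c * a ^+ 2 = a * (a * c - b ^+ 2) by ring.
rewrite pmulr_rge0 // le_eqVlt eq_sym (negPf Dn) //.
Qed.

Lemma comb_pd (t a b c a' b' c' : R) : 0 < t -> t < 1 ->
  0 < a -> 0 < a * c - b ^+ 2 -> 0 < a' -> 0 < a' * c' - b' ^+ 2 ->
  0 < (t * a + (1 - t) * a') * (t * c + (1 - t) * c') - (t * b + (1 - t) * b') ^+ 2.
Proof.
move=> t0 t1 a0 D0 a'0 D'0.
set X : R := a * c' + a' * c - 2 * b * b'.
have HX : a * a' * X = a ^+ 2 * (a' * c' - b' ^+ 2) + a' ^+ 2 * (a * c - b ^+ 2)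
   + (a * b' - a' * b) ^+ 2 by rewrite /X; ring.
have X0 : 0 <= X.
  have : 0 <= a * a' * X.
    rewrite HX !addr_ge0 ?sqr_ge0 // mulr_ge0 ?sqr_ge0 // ltW //.
  by rewrite pmulr_rge0 // mulr_gt0.
have -> : (t * a + (1 - t) * a') * (t * c + (1 - t) * c') - (t * b + (1 - t) * b') ^+ 2
  = t ^+ 2 * (a * c - b ^+ 2) + (1 - t) ^+ 2 * (a' * c' - b' ^+ 2) + t * (1 - t) * X.
  by rewrite /X; ring.
have t'0 : 0 < 1 - t by lra.
have h1 : 0 < t ^+ 2 * (a * c - b ^+ 2) by rewrite mulr_gt0 // exprn_gt0.
have h2 : 0 < (1 - t) ^+ 2 * (a' * c' - b' ^+ 2) by rewrite mulr_gt0 // exprn_gt0.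
have h3 : 0 <= t * (1 - t) * X by rewrite !mulr_ge0 // ltW.
lra.
Qed.

Lemma key_ineq (t a b c a' b' c' : R) : 0 < t -> t < 1 ->
  0 < a -> 0 < a * c - b ^+ 2 -> 0 < a' -> 0 < a' * c' - b' ^+ 2 ->
  ((t * a + (1 - t) * a') + (t * c + (1 - t) * c')) /
  ((t * a + (1 - t) * a') * (t * c + (1 - t) * c') - (t * b + (1 - t) * b') ^+ 2) <=
  t * ((a + c) / (a * c - b ^+ 2)) + (1 - t) * ((a' + c') / (a' * c' - b' ^+ 2)).
Proof.
move=> t0 t1 a0 D0 a'0 D'0.
have Dm := comb_pd t0 t1 a0 D0 a'0 D'0.
rewrite -(FF_opt Dm) FF_lin.
have t'0 : 0 < 1 - t by lra.
apply: lerD; (apply: ler_wpM2l; first exact: ltW); exact: FF_bound.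
Qed.
End S.


Section S3.
Variable R : realType.

Definition psd2 (M : 'M[R]_2) := M 0 1 = M 1 0 /\
  forall z1 z2, 0 <= qf (M 0 0) (M 0 1) (M 1 1) z1 z2.

Lemma speb_unit (M : 'M[R]_2) : psd2 M -> M \in unitmx ->
  0 < M 0 0 /\ 0 < M 0 0 * M 1 1 - M 0 1 ^+ 2 /\
  speb M = ((M 0 0 + M 1 1) / (M 0 0 * M 1 1 - M 0 1 ^+ 2))%:E.
Proof.
move=> [sM pM] uM.
have dE : \det M = M 0 0 * M 1 1 - M 0 1 ^+ 2 by rewrite det22 -sM expr2.
have dn : M 0 0 * M 1 1 - M 0 1 ^+ 2 != 0 by rewrite -dE -unitfE -unitmxE.
have [h1 h2] := psd_pd pM dn.
by rewrite /speb uM tr_inv22 // dE.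
Qed.

Lemma speb_nonunit (M : 'M[R]_2) : M \notin unitmx -> speb M = +oo%E.
Proof. by rewrite /speb => /negPf ->. Qed.

Lemma speb_notNy (M : 'M[R]_2) : speb M != -oo%E.
Proof. by rewrite /speb; case: ifP. Qed.

Lemma speb_convex (A B : 'M[R]_2) (t : R) : psd2 A -> psd2 B -> 0 <= t -> t <= 1 ->
  (speb (t *: A + (1 - t) *: B) <= t%:E * speb A + (1 - t)%:E * speb B)%E.
Proof.
move=> pA pB t0 t1.
case: (eqVneq t 0) => [->|tn0].
  by rewrite scale0r add0r subr0 scale1r mul0e add0e mul1e.
case: (eqVneq t 1) => [->|tn1].
  by rewrite scale1r subrr scale0r addr0 mul0e adde0 mul1e.
have tp : 0 < t by rewrite lt_def tn0.
have tl : t < 1 by rewrite lt_def eq_sym tn1.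
have tp' : 0 < 1 - t by lra.
case: (boolP (A \in unitmx)) => uA; last first.
  rewrite [speb A]speb_nonunit // gt0_muley ?lte_fin //.
  case: (boolP (B \in unitmx)) => uB; last first.
    by rewrite [speb B]speb_nonunit // gt0_muley ?lte_fin // addey // leey.
  have [_ [_ ->]] := speb_unit pB uB.
  by rewrite -EFinM addye // leey.
case: (boolP (B \in unitmx)) => uB; last first.
  rewrite [speb B]speb_nonunit // gt0_muley ?lte_fin //.
  have [_ [_ ->]] := speb_unit pA uA.
  by rewrite -EFinM addey // leey.
have [a0 [D0 ->]] := speb_unit pA uA.
have [a0' [D0' ->]] := speb_unit pB uB.
set M := t *: A + (1 - t) *: B.
have pM : psd2 M.
  case: pA pB => [sA qA] [sB qB]; split; first by rewrite /M !mxE sA sB.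
  move=> z1 z2; rewrite /M !mxE.
  have -> : qf (t * A 0 0 + (1 - t) * B 0 0) (t * A 0 1 + (1 - t) * B 0 1)
     (t * A 1 1 + (1 - t) * B 1 1) z1 z2 =
     t * qf (A 0 0) (A 0 1) (A 1 1) z1 z2 + (1 - t) * qf (B 0 0) (B 0 1) (B 1 1) z1 z2
    by rewrite /qf; ring.
  by rewrite addr_ge0 // mulr_ge0 // ltW.
have DM := comb_pd tp tl a0 D0 a0' D0'.
have uM : M \in unitmx.
  rewrite unitmxE unitfE det22 -pM.1 -expr2 /M !mxE gt_eqF //.
have [_ [_ ->]] := speb_unit pM uM.
rewrite -!EFinM -EFinD lee_fin /M !mxE.
exact: key_ineq.
Qed.
End S3.


Section S4.
Variable R : realType.

Lemma JrE (phi : R) i j : Jr phi i j =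
  (if i == 0 then cos phi else sin phi) * (if j == 0 then cos phi else sin phi).
Proof. by rewrite /Jr !mxE big_ord1 !mxE. Qed.

Lemma psd2_Jr (phi : R) : psd2 (Jr phi).
Proof.
split; first by rewrite !JrE /= mulrC.
move=> z1 z2; rewrite !JrE /=.
have -> : qf (cos phi * cos phi) (cos phi * sin phi) (sin phi * sin phi) z1 z2 =
  (cos phi * z1 + sin phi * z2) ^+ 2 by rewrite /qf; ring.
exact: sqr_ge0.
Qed.

Lemma psd2_0 : psd2 (0 : 'M[R]_2).
Proof. by split; rewrite ?mxE // => z1 z2; rewrite ?mxE /qf; lra. Qed.

Lemma psd2_add (A B : 'M[R]_2) : psd2 A -> psd2 B -> psd2 (A + B).
Proof.
move=> [sA qA] [sB qB]; split; first by rewrite !mxE sA sB.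
move=> z1 z2; rewrite !mxE.
have -> : qf (A 0 0 + B 0 0) (A 0 1 + B 0 1) (A 1 1 + B 1 1) z1 z2 =
  qf (A 0 0) (A 0 1) (A 1 1) z1 z2 + qf (B 0 0) (B 0 1) (B 1 1) z1 z2
  by rewrite /qf; ring.
exact: addr_ge0.
Qed.

Lemma psd2_scale (k : R) (A : 'M[R]_2) : 0 <= k -> psd2 A -> psd2 (k *: A).
Proof.
move=> k0 [sA qA]; split; first by rewrite !mxE sA.
move=> z1 z2; rewrite !mxE.
have -> : qf (k * A 0 0) (k * A 0 1) (k * A 1 1) z1 z2 =
  k * qf (A 0 0) (A 0 1) (A 1 1) z1 z2 by rewrite /qf; ring.
exact: mulr_ge0.
Qed.

Lemma psd2_sum (I : finType) (F : I -> 'M[R]_2) :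
  (forall i, psd2 (F i)) -> psd2 (\sum_i F i).
Proof.
move=> H; elim/big_ind: _ => //; [exact: psd2_0 | exact: psd2_add].
Qed.

Lemma quad_rank1 p (u w : 'cV[R]_p) :
  (w^T *m (u *m u^T) *m w) 0 0 = (\sum_i w i 0 * u i 0) ^+ 2.
Proof.
rewrite !mulmxA -mulmxA mxE big_ord1 expr2; congr (_ * _); rewrite mxE.
  by apply: eq_bigr => i _; rewrite mxE.
by apply: eq_bigr => i _; rewrite mxE mulrC.
Qed.

Lemma ones_sum p (w : 'cV[R]_p) : ((ones R p)^T *m w) 0 0 = \sum_i w i 0.
Proof. by rewrite mxE; apply: eq_bigr => i _; rewrite !mxE mul1r. Qed.

Lemma mxBE m n (A B : 'M[R]_(m,n)) i j : (A - B) i j = A i j - B i j.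
Proof. by rewrite !mxE. Qed.

Lemma core p (w ph : 'cV[R]_p) (J : 'M[R]_2) : psd2 J -> J \in unitmx ->
  J 0 0 = \sum_i w i 0 * cos (ph i 0) ^+ 2 ->
  J 0 1 = \sum_i w i 0 * (cos (ph i 0) * sin (ph i 0)) ->
  J 1 1 = \sum_i w i 0 * sin (ph i 0) ^+ 2 ->
  speb J = (4 * ((ones R p)^T *m w) 0 0 / (w^T *m Lambda ph *m w) 0 0)%:E.
Proof.
move=> pJ uJ hP hB hQ.
have [_ [D0 ->]] := speb_unit pJ uJ.
congr (_%:E).
rewrite /Lambda !mulmxBr !mulmxBl !mxBE !quad_rank1 ones_sum.
have eA : \sum_i w i 0 * (ones R p) i 0 = J 0 0 + J 1 1.
  rewrite hP hQ -big_split; apply: eq_bigr => i _ /=.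
  by rewrite mxE -mulrDr cos2Dsin2 mulr1.
have eS : \sum_i w i 0 = J 0 0 + J 1 1.
  by rewrite -eA; apply: eq_bigr => i _; rewrite mxE mulr1.
have eC : \sum_i w i 0 * (cvec (2 *: ph)) i 0 = J 0 0 - J 1 1.
  rewrite hP hQ -sumrB; apply: eq_bigr => i _ /=.
  by rewrite !mxE mulr_natl mulr2n cosD -mulrBr !expr2.
have eSi : \sum_i w i 0 * (svec (2 *: ph)) i 0 = 2 * J 0 1.
  rewrite hB mulr_sumr; apply: eq_bigr => i _ /=.
  rewrite !mxE mulr_natl mulr2n sinD; ring.
rewrite eA eC eSi eS.
have Dn : J 0 0 * J 1 1 - J 0 1 ^+ 2 != 0 by rewrite gt_eqF.
field; rewrite Dn andbT.
have -> : (J 0 0 + J 1 1) ^+ 2 - (J 0 0 - J 1 1) ^+ 2 - (2 * J 0 1) ^+ 2 =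
  4 * (J 0 0 * J 1 1 - J 0 1 ^+ 2) by ring.
by rewrite mulf_neq0 // pnatr_eq0.
Qed.
End S4.


Section S5.
Variable R : realType.

Lemma Lambda_sym p (ph : 'cV[R]_p) : (Lambda ph)^T = Lambda ph.
Proof. by rewrite /Lambda !linearB /= !trmx_mul !trmxK. Qed.

Lemma rank1 p (u : 'cV[R]_p) : (\rank (u *m u^T) <= 1)%N.
Proof. exact: leq_trans (mxrankM_maxl _ _) (rank_leq_col _). Qed.

Lemma Lambda_rank p (ph : 'cV[R]_p) : (\rank (Lambda ph) <= 3)%N.
Proof.
rewrite /Lambda.
apply: leq_trans (mxrank_add _ _) _; rewrite mxrank_opp.
have h := mxrank_add (ones R p *m (ones R p)^T) (- (cvec (2 *: ph) *m (cvec (2 *: ph))^T)).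
rewrite mxrank_opp in h.
have h1 := rank1 (ones R p); have h2 := rank1 (cvec (2 *: ph)); have h3 := rank1 (svec (2 *: ph)).
apply: leq_trans (leq_add h (leqnn _)) _.
by rewrite -!addnA (leq_add h1) // (leq_add h2 h3).
Qed.

Lemma RdiagE n (xi x : 'cV[R]_n) i : (Rdiag xi *m x) i 0 = xi i 0 * x i 0.
Proof. by rewrite /Rdiag mul_diag_mx !mxE. Qed.

Lemma sum_stack Nr Nt (v ph : 'I_Nr -> 'cV[R]_Nt) (f : R -> R) :
  \sum_i (\mxcol_k v k) i 0 * f ((\mxcol_k ph k) i 0) =
  \sum_k \sum_j v k j 0 * f (ph k j 0).
Proof.
have -> : \sum_i (\mxcol_k v k) i 0 * f ((\mxcol_k ph k) i 0) =
   (((\mxcol_k v k)^T *m map_mx f (\mxcol_k ph k)) 0 0).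
  by rewrite mxE; apply: eq_bigr => i _; rewrite !mxE.
have -> : map_mx f (\mxcol_k ph k) = \mxcol_k map_mx f (ph k).
  by apply/matrixP => i j; rewrite !mxE.
rewrite tr_mxcol mul_mxrow_mxcol summxE; apply: eq_bigr => k _.
by rewrite mxE; apply: eq_bigr => j _; rewrite !mxE.
Qed.

End S5.


Section S6.
Variable R : realType.

Lemma combE m (x y : 'cV[R]_m) t j : (t *: x + (1 - t) *: y) j 0 = t * x j 0 + (1 - t) * y j 0.
Proof. by rewrite !mxE. Qed.

Lemma Jw_lin n (phi xi x y : 'cV[R]_n) t :
  Je_wireless phi xi (t *: x + (1 - t) *: y) =
  t *: Je_wireless phi xi x + (1 - t) *: Je_wireless phi xi y.
Proof.
rewrite /Je_wireless !scaler_sumr -big_split; apply: eq_bigr => j _ /=.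
by rewrite combE !scalerA -scalerDl; congr (_ *: _); ring.
Qed.

Lemma Jr_lin Nr Nt (phi xi : 'I_Nr -> 'cV[R]_Nt) x y t :
  Je_radar phi xi (t *: x + (1 - t) *: y) =
  t *: Je_radar phi xi x + (1 - t) *: Je_radar phi xi y.
Proof.
rewrite /Je_radar !scaler_sumr -big_split; apply: eq_bigr => j _ /=.
rewrite !scaler_sumr -big_split; apply: eq_bigr => k _ /=.
by rewrite combE !scalerA -scalerDl; congr (_ *: _); ring.
Qed.

Lemma Jw_psd n (phi xi x : 'cV[R]_n) : (forall j, 0 <= xi j 0) -> nonneg_vec x ->
  psd2 (Je_wireless phi xi x).
Proof.
move=> hxi hx; apply: psd2_sum => j; apply: psd2_scale; last exact: psd2_Jr.
exact: mulr_ge0.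
Qed.

Lemma Jrad_psd Nr Nt (phi xi : 'I_Nr -> 'cV[R]_Nt) x : (forall k j, 0 <= xi k j 0) ->
  nonneg_vec x -> psd2 (Je_radar phi xi x).
Proof.
move=> hxi hx; apply: psd2_sum => j; apply: psd2_sum => k.
apply: psd2_scale; last exact: psd2_Jr.
exact: mulr_ge0.
Qed.

Lemma entryE (I : finType) (c : I -> R) (ph : I -> R) a b :
  (\sum_i c i *: Jr (ph i)) a b = \sum_i c i * Jr (ph i) a b.
Proof. by rewrite summxE; apply: eq_bigr => i _; rewrite mxE. Qed.

Theorem lemma1_aux :
  (forall (n : nat) (phi xi : 'cV[R]_n),
     (1 <= n)%N -> (forall j, 0 <= xi j 0) ->
     convex_on_nonneg (fun x => speb (Je_wireless phi xi x)) /\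
     (Lambda phi)^T = Lambda phi /\ (\rank (Lambda phi) <= 3)%N /\
     (forall x : 'cV[R]_n, nonneg_vec x -> Je_wireless phi xi x \in unitmx ->
        speb (Je_wireless phi xi x)
        = (speb_formula (Rdiag xi) (Lambda phi) x)%:E)) /\
  (forall (Nt Nr : nat) (phi xi : 'I_Nr -> 'cV[R]_Nt),
     (1 <= Nt)%N -> (1 <= Nr)%N -> (forall k j, 0 <= xi k j 0) ->
     convex_on_nonneg (fun x => speb (Je_radar phi xi x)) /\
     (Lambda (phistack phi))^T = Lambda (phistack phi) /\
     (\rank (Lambda (phistack phi)) <= 3)%N /\
     (forall x : 'cV[R]_Nt, nonneg_vec x -> Je_radar phi xi x \in unitmx ->
        speb (Je_radar phi xi x)
        = (speb_formula (Rstack xi) (Lambda (phistack phi)) x)%:E)).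
Proof.
split.
  move=> n phi xi _ hxi; split; last split; last split.
  - move=> x y t hx hy t0 t1 /=; rewrite Jw_lin.
    by apply: speb_convex => //; apply: Jw_psd.
  - exact: Lambda_sym.
  - exact: Lambda_rank.
  move=> x hx uJ; rewrite /speb_formula -mulmxA.
  have -> : x^T *m (Rdiag xi)^T *m Lambda phi *m Rdiag xi *m x =
    (Rdiag xi *m x)^T *m Lambda phi *m (Rdiag xi *m x) by rewrite trmx_mul !mulmxA.
  apply: core => //; first exact: Jw_psd.
  1-3: rewrite /Je_wireless summxE; apply: eq_bigr => j _; rewrite mxE RdiagE JrE /=; ring.
move=> Nt Nr phi xi _ _ hxi; split; last split; last split.
- move=> x y t hx hy t0 t1 /=; rewrite Jr_lin.
  by apply: speb_convex => //; apply: Jrad_psd.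
- exact: Lambda_sym.
- exact: Lambda_rank.
move=> x hx uJ; rewrite /speb_formula -mulmxA.
have -> : x^T *m (Rstack xi)^T *m Lambda (phistack phi) *m Rstack xi *m x =
  (Rstack xi *m x)^T *m Lambda (phistack phi) *m (Rstack xi *m x) by rewrite trmx_mul !mulmxA.
apply: core => //; first exact: Jrad_psd.
- rewrite /Rstack mxcol_mul /phistack.
  apply: etrans _ (esym (sum_stack _ _ (fun a => cos a ^+ 2))) => /=.
  rewrite /Je_radar summxE exchange_big; apply: eq_bigr => k _.
  rewrite summxE; apply: eq_bigr => j _; rewrite mxE RdiagE JrE /=; ring.
- rewrite /Rstack mxcol_mul /phistack.
  apply: etrans _ (esym (sum_stack _ _ (fun a => cos a * sin a))) => /=.
  rewrite /Je_radar summxE exchange_big; apply: eq_bigr => k _.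
  rewrite summxE; apply: eq_bigr => j _; rewrite mxE RdiagE JrE /=; ring.
- rewrite /Rstack mxcol_mul /phistack.
  apply: etrans _ (esym (sum_stack _ _ (fun a => sin a ^+ 2))) => /=.
  rewrite /Je_radar summxE exchange_big; apply: eq_bigr => k _.
  rewrite summxE; apply: eq_bigr => j _; rewrite mxE RdiagE JrE /=; ring.
Qed.
End S6.


Unset Implicit Arguments.
Theorem lemma1 (R : realType) :
  (* wireless network localization *)
  (forall (n : nat) (phi xi : 'cV[R]_n),
     (1 <= n)%N -> (forall j, 0 <= xi j 0) ->
     convex_on_nonneg (fun x => speb (Je_wireless phi xi x)) /\
     (Lambda phi)^T = Lambda phi /\ (\rank (Lambda phi) <= 3)%N /\
     (forall x : 'cV[R]_n, nonneg_vec x -> Je_wireless phi xi x \in unitmx ->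
        speb (Je_wireless phi xi x)
        = (speb_formula (Rdiag xi) (Lambda phi) x)%:E)) /\
  (* radar network localization *)
  (forall (Nt Nr : nat) (phi xi : 'I_Nr -> 'cV[R]_Nt),
     (1 <= Nt)%N -> (1 <= Nr)%N -> (forall k j, 0 <= xi k j 0) ->
     convex_on_nonneg (fun x => speb (Je_radar phi xi x)) /\
     (Lambda (phistack phi))^T = Lambda (phistack phi) /\
     (\rank (Lambda (phistack phi)) <= 3)%N /\
     (forall x : 'cV[R]_Nt, nonneg_vec x -> Je_radar phi xi x \in unitmx ->
        speb (Je_radar phi xi x)
        = (speb_formula (Rstack xi) (Lambda (phistack phi)) x)%:E)).
Proof. exact: lemma1_aux. Qed.
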